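(* Let $B=(V,E)$ be a simple Bratteli diagram with $V_0=\{v^0\}$ and $V_k=\{v_1^k,\dots,v_{n(k)}^k\}$, and for $k\ge1$ let $h_j^k\ge1$ be the number of finite paths from $v^0$ to $v_j^k$. Then $\mathbb Q(K^0(V,E),[v^0])=\mathbb Z[v^0]$ if and only if $\gcd(h_1^k,\dots,h_{n(k)}^k)=1$ for all $k\ge1$.
   Context: A Bratteli diagram has levels $V_k$ (finite) and edges $E_k$ from $V_{k-1}$ to $V_k$, with incidence matrices $A_k$ ($|V_k|\times|V_{k-1}|$) counting edges; simple means some telescoping has strictly positive incidence matrices. $K^0(V,E)$ is the direct limit of $\mathbb Z^{V_0}\xrightarrow{A_1}\mathbb Z^{V_1}\xrightarrow{A_2}\cdots$ ordered by the images of the positive cones, with order unit $[v^0]$ the class of $1\in\mathbb Z^{V_0}$. $\mathbb Q(G,u)=\{g\in G:pg=mu\text{ for some nonzero }p\in\mathbb Z,\ m\in\mathbb Z\}$. *)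

(* Defs.v *)
From HB Require Import structures.
From mathcomp Require Import all_boot all_order all_algebra.
Set Implicit Arguments. Unset Strict Implicit. Unset Printing Implicit Defensive.
Import Order.TTheory GRing.Theory Num.Theory.
Local Open Scope ring_scope.

(* A Bratteli diagram is given by the level sizes nv k = |V_k| and, for each
   k, the incidence matrix inc k : |V_(k+1)| x |V_k| (this is A_(k+1) of the
   paper), whose (i,j) entry is the number of edges from v_j^k to v_i^(k+1). *)
Section Bratteli.
Variable nv : nat -> nat.
Variable inc : forall k, 'M[nat]_(nv k.+1, nv k).

Definition is_bratteli : Prop :=
  (forall k (i : 'I_(nv k.+1)), exists j : 'I_(nv k), (0 < inc k i j)%N) /\
  (forall k (j : 'I_(nv k)), exists i : 'I_(nv k.+1), (0 < inc k i j)%N).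

Fixpoint trans (k d : nat) : 'M[nat]_(nv (d + k), nv k) :=
  match d with
  | 0 => 1%:M
  | d'.+1 => inc (d' + k) *m trans k d'
  end.

Definition simple_bratteli : Prop :=
  forall k, exists d, (0 < d)%N /\
    forall i j, (0 < trans k d i j)%N.

Fixpoint hvec (k : nat) : 'cV[nat]_(nv k) :=
  match k with
  | 0 => const_mx 1%N
  | k'.+1 => inc k' *m hvec k'
  end.
Definition npaths (k : nat) (j : 'I_(nv k)) : nat := hvec k j ord0.

(* The direct limit K^0(V,E) of Z^{V_0} -A_1-> Z^{V_1} -A_2-> ...
   Elements are represented by pairs (k, x) with x in Z^{V_k}. *)
Definition DL := {k : nat & 'cV[int]_(nv k)}.

Definition push (k d : nat) (x : 'cV[int]_(nv k)) : 'cV[int]_(nv (d + k)) :=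
  map_mx (fun n : nat => n%:Z) (trans k d) *m x.

Definition dl_eq (g1 g2 : DL) : Prop :=
  let: existT k x := g1 in let: existT l y := g2 in
  exists d e (H : (d + k = e + l)%N),
    castmx (congr1 nv H, erefl 1%N) (push d x) = push e y.

Definition dl_scale (p : int) (g : DL) : DL :=
  let: existT k x := g in existT _ k (p *: x).

Definition dl_unit : DL := existT _ 0%N (const_mx 1).

Definition inQ (g : DL) : Prop :=
  exists (p m : int), p != 0 /\ dl_eq (dl_scale p g) (dl_scale m dl_unit).

Definition inZu (g : DL) : Prop :=
  exists t : int, dl_eq g (dl_scale t dl_unit).

End Bratteli.

Arguments npaths {nv} inc k j.

(* Main.v *)
Require Import Defs.
From HB Require Import structures.
From mathcomp Require Import all_boot all_order all_algebra.
Import Order.TTheory GRing.Theory Num.Theory.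

Section Aux.
Variable nv : nat -> nat.
Variable inc : forall k, 'M[nat]_(nv k.+1, nv k).
Local Open Scope ring_scope.

Definition hZ n : 'cV[int]_(nv n) := map_mx Posz (hvec inc n).

Lemma trans_hvec k d : trans inc k d *m hvec inc k = hvec inc (d + k).
Proof.
elim: d => [|d IH] /=; first by rewrite mul1mx.
by rewrite -mulmxA IH.
Qed.

Lemma push_hZ k d : push inc d (hZ k) = hZ (d + k).
Proof. by rewrite /push /hZ -map_mxM trans_hvec. Qed.

Lemma push_scale k d (p : int) (x : 'cV[int]_(nv k)) :
  push inc d (p *: x) = p *: push inc d x.
Proof. by rewrite /push scalemxAr. Qed.

Lemma push_unit e (t : int) :
  push inc e (t *: (const_mx 1 : 'cV[int]_(nv 0))) = t *: hZ (e + 0).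
Proof.
have -> : (const_mx 1 : 'cV[int]_(nv 0)) = hZ 0 by rewrite /hZ /= map_const_mx.
by rewrite push_scale push_hZ.
Qed.

Lemma cast_fam (F : forall n, 'cV[int]_(nv n)) a b (H : a = b) :
  castmx (congr1 nv H, erefl 1%N) (F a) = F b.
Proof. by case: b / H; rewrite castmx_id. Qed.

Lemma castZ m1 m2 (H : m1 = m2) (p : int) (A : 'cV[int]_m1) :
  castmx (H, erefl 1%N) (p *: A) = p *: castmx (H, erefl 1%N) A.
Proof. by case: m2 / H; rewrite !castmx_id. Qed.


Lemma hvec_pos : nv 0 = 1%N -> is_bratteli inc ->
  forall n, exists j : 'I_(nv n), (0 < hvec inc n j ord0)%N.
Proof.
move=> h0 [_ B2]; elim=> [|n [j Hj]].
  have j0 : (0 < nv 0)%N by rewrite h0.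
  by exists (Ordinal j0); rewrite /= mxE.
have [i Hi] := B2 n j; exists i => /=.
rewrite mxE (bigD1 j) //=.
by rewrite ltn_addr // muln_gt0 Hi Hj.
Qed.

End Aux.

Theorem mainTheorem18 (nv : nat -> nat)
    (inc : forall k, 'M[nat]_(nv k.+1, nv k)) :
  nv 0 = 1%N ->
  is_bratteli inc ->
  simple_bratteli inc ->
  (forall g : DL nv, inQ inc g <-> inZu inc g) <->
  (forall k, (1 <= k)%N ->
     \big[gcdn/0%N]_(j < nv k) npaths inc k j = 1%N).
Proof.
Local Open Scope ring_scope.
move=> h0 Hb _; split.
- move=> Heq k _.
  set d := \big[gcdn/0%N]_(j < nv k) npaths inc k j.
  have dv : forall j : 'I_(nv k), (d %| hvec inc k j ord0)%N.
    move=> j; rewrite /d (bigD1 j) //=; exact: dvdn_gcdl.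
  have [j0 Hj0] := @hvec_pos nv inc h0 Hb k.
  have dpos : (0 < d)%N.
    by rewrite lt0n; apply/eqP => d0; move: (dv j0); rewrite d0 dvd0n => /eqP E;
       rewrite E in Hj0.
  pose y : 'cV[int]_(nv k) := map_mx (fun n : nat => Posz (n %/ d)) (hvec inc k).
  have dy : (Posz d) *: y = @hZ nv inc k.
    apply/matrixP => i j; rewrite !mxE.
    have -> : j = ord0 by apply/val_inj; case: j => [[]].
    by rewrite -PoszM mulnC divnK.
  have Q : inQ inc (existT _ k y).
    exists (Posz d), 1; split; first by rewrite eqz_nat -lt0n.
    exists 0%N, k, (esym (addn0 k)) => /=.
    rewrite push_unit scale1r dy /push /= map_mx1 mul1mx.
    exact: (@cast_fam nv (hZ nv inc) _ _ (esym (addn0 k))).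
  have [t [d1 [e1 [H1 E1]]]] := (proj1 (Heq _)) Q.
  move: E1; rewrite /dl_unit push_unit => E1.
  have E2 := congr1 (fun M => (Posz d) *: M) E1.
  move: E2; rewrite /= -castZ -push_scale dy push_hZ cast_fam scalerA => E2.
  have [j Hj] := @hvec_pos nv inc h0 Hb (e1 + 0).
  have := congr1 (fun M : 'cV[int]_(nv (e1+0)) => M j ord0) E2; rewrite /= !mxE => E3.
  have : (Posz d * t == 1).
    apply/eqP; apply: (mulIf (x := Posz (hvec inc (e1 + 0) j ord0))).
      by rewrite eqz_nat -lt0n.
    by rewrite mul1r -E3.
  move/eqP/(congr1 (fun z : int => `|z|%N)); rewrite abszM /=.
  by move/eqP; rewrite muln_eq1 => /andP [/eqP].
- move=> Hg g; split; last first.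
    move=> [t Ht]; exists 1, t; split => //.
    by case: g Ht => k x; rewrite /dl_scale scale1r.
  case: g => k x [p [m [p0 [d [e [H E]]]]]].
  exists (m %/ p)%Z; exists d, e, H.
  move: E; rewrite /dl_scale /dl_unit !push_unit push_scale castZ.
  set X := castmx _ (push inc d x) => E; clearbody X.
  move: X E; set n := (e + 0)%N => X E; clearbody n.
  have dv : (p %| m)%Z.
    have key : forall j : 'I_(nv n), (`|p| %| `|m| * hvec inc n j ord0)%N.
      move=> j; have := congr1 (fun M : 'cV[int]_(nv n) => M j ord0) E; rewrite /= !mxE => Ej.
      apply/dvdnP; exists `|X j ord0|%N.
      by move/(congr1 absz): Ej; rewrite !abszM absz_nat mulnC => <-.
    have : (`|p| %| `|m| * \big[gcdn/0%N]_(j < nv n) npaths inc n j)%N.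
      apply: (big_ind (fun g => `|p| %| `|m| * g)%N).
      + by rewrite muln0 dvdn0.
      + by move=> a b Ha Hb'; rewrite muln_gcdr dvdn_gcd Ha Hb'.
      + by move=> j _; apply: key.
    move: X E key; case: n => [|n] X E key.
      move=> _; have j0 : (0 < nv 0)%N by rewrite h0.
      by move: (key (Ordinal j0)); rewrite /= mxE muln1 dvdzE.
    by rewrite Hg // muln1 dvdzE.
  apply/matrixP => i j; move: (congr1 (fun M : 'cV[int]_(nv n) => M i j) E); rewrite !mxE => Ei.
  apply: (mulfI p0).
  by rewrite Ei mulrA (mulrC p) divzK.
Qed.
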